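(* Let $k$ be a nonnegative integer and let $i,j\geq k+2$ be integers. Then $$R_k^{\mathcal{CO}}(i,j)=1+\frac{(i-1)(j-1)-\{i-1\}\{j-1\}}{k+1},$$ where $\{x\}\in\{0,1,\dots,k\}$ denotes the residue of the integer $x$ modulo $k+1$ and $\mathcal{CO}$ is the class of cographs.
   Context: All graphs are finite and simple. For a graph $G$ and a nonnegative integer $k$, a $k$-sparse $j$-set is a set of $j$ vertices of $G$ inducing a subgraph of maximum degree at most $k$; a $k$-dense $i$-set is a set of $i$ vertices of $G$ that is $k$-sparse in the complement of $G$. For a graph class $\mathcal{G}$, $R_k^{\mathcal{G}}(i,j)$ is the smallest natural number $n$ such that every graph on $n$ vertices in $\mathcal{G}$ has either a $k$-dense $i$-set or a $k$-sparse $j$-set. A cograph is a graph containing no induced path on four vertices (equivalently, the complement of every connected induced subgraph on at least two vertices is disconnected). *)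

(* Defs.v *)
From mathcomp Require Import all_boot.
Set Implicit Arguments. Unset Strict Implicit. Unset Printing Implicit Defensive.

Definition simple_graph (n : nat) (e : rel 'I_n) : Prop :=
  symmetric e /\ irreflexive e.

Definition cograph (n : nat) (e : rel 'I_n) : Prop :=
  ~ exists a b c d : 'I_n,
      [/\ uniq [:: a; b; c; d],
          [&& e a b, e b c & e c d] &
          [&& ~~ e a c, ~~ e b d & ~~ e a d]].

Definition compl_rel (n : nat) (e : rel 'I_n) : rel 'I_n :=
  fun x y => (x != y) && ~~ e x y.

Definition k_sparse_set (n : nat) (e : rel 'I_n) (k j : nat) (S : {set 'I_n}) : Prop :=
  #|S| = j /\ forall x, x \in S -> #|[set y in S | e x y]| <= k.

Definition k_dense_set (n : nat) (e : rel 'I_n) (k i : nat) (S : {set 'I_n}) : Prop :=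
  k_sparse_set (compl_rel e) k i S.

Definition ramsey_prop_cograph (k i j n : nat) : Prop :=
  forall e : rel 'I_n, simple_graph e -> cograph e ->
    (exists S, k_dense_set e k i S) \/ (exists S, k_sparse_set e k j S).

Definition is_ramsey_cograph (k i j N : nat) : Prop :=
  ramsey_prop_cograph k i j N /\ forall n, n < N -> ~ ramsey_prop_cograph k i j n.

(* Main.v *)
Require Import Defs.
From Stdlib Require Import Classical FunctionalExtensionality.
From mathcomp Require Import all_boot.
From mathcomp Require Import zify.
Set Implicit Arguments. Unset Strict Implicit. Unset Printing Implicit Defensive.

Definition sparseb (T : finType) (e : rel T) (k : nat) (S : {set T}) : bool :=
  [forall x in S, #|[set y in S | e x y]| <= k].
Definition crel (T : finType) (e : rel T) : rel T := fun x y => (x != y) && ~~ e x y.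
Definition spB (T : finType) (e : rel T) (k : nat) (U : {set T}) (b : nat) : Prop :=
  forall S : {set T}, S \subset U -> sparseb e k S -> #|S| <= b.
Definition P4free (T : finType) (e : rel T) : Prop :=
  ~ exists a b c d : T,
      [/\ uniq [:: a; b; c; d],
          [&& e a b, e b c & e c d] &
          [&& ~~ e a c, ~~ e b d & ~~ e a d]].
Definition sep (T : finType) (e : rel T) (U A : {set T}) : Prop :=
  [/\ A \subset U, A != set0, A != U &
      forall x y, x \in A -> y \in U :\: A -> ~~ e x y].

Lemma sparse_sub (T : finType) (e : rel T) k (S S' : {set T}) :
  S' \subset S -> sparseb e k S -> sparseb e k S'.
Proof.
move=> sub /forall_inP H; apply/forall_inP => x xS'.
apply: leq_trans (H x (subsetP sub x xS')).
apply: subset_leq_card; apply/subsetP => y; rewrite !inE => /andP[yS' ->].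
by rewrite (subsetP sub y yS').
Qed.

Lemma exists_sub (T : finType) (S : {set T}) t :
  t <= #|S| -> exists S' : {set T}, S' \subset S /\ #|S'| = t.
Proof.
move=> le; move: {2}(#|S| - t) (erefl (#|S| - t)) => d.
elim: d S le => [|d IH] S le Hd.
  by exists S; split => //; apply/eqP; rewrite eqn_leq le -subn_eq0 Hd.
have : 0 < #|S| by lia.
rewrite card_gt0 => /set0Pn [x xS].
have Hc := cardsD1 x S; rewrite xS in Hc.
have [S' [s1 s2]] : exists S' : {set T}, S' \subset S :\ x /\ #|S'| = t.
  by apply: IH; lia.
exists S'; split => //; apply: subset_trans s1 _; exact: subsetDl.
Qed.

Lemma small_sparse (T : finType) (e : rel T) k (S : {set T}) :
  irreflexive e -> #|S| <= k.+1 -> sparseb e k S.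
Proof.
move=> irr le; apply/forall_inP => x xS.
have : [set y in S | e x y] \subset S :\ x.
  apply/subsetP => y; rewrite !inE => /andP[yS exy]; rewrite yS andbT.
  by apply/eqP => yx; subst; rewrite irr in exy.
move/subset_leq_card; have := cardsD1 x S; rewrite xS; lia.
Qed.

Lemma spB_small (T : finType) (e : rel T) k U c :
  irreflexive e -> spB e k U c -> c <= k -> #|U| <= c.
Proof.
move=> irr H ck; rewrite leqNgt; apply/negP => lt.
have [S [sU cS]] := exists_sub (lt : c.+1 <= #|U|).
have sp : sparseb e k S by apply: small_sparse => //; rewrite cS.
have := H S sU sp; lia.
Qed.

Lemma crelK (T : finType) (e : rel T) : irreflexive e -> crel (crel e) = e.
Proof.
move=> irr; apply: functional_extensionality => x; apply: functional_extensionality => y.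
rewrite /crel; case: eqP => [->|_] /=; first by rewrite irr.
by rewrite negbK.
Qed.

Lemma crel_sym (T : finType) (e : rel T) : symmetric e -> symmetric (crel e).
Proof. by move=> sy x y; rewrite /crel eq_sym sy. Qed.

Lemma crel_irr (T : finType) (e : rel T) : irreflexive (crel e).
Proof. by move=> x; rewrite /crel eqxx. Qed.

Lemma crel_P4 (T : finType) (e : rel T) : symmetric e -> P4free e -> P4free (crel e).
Proof.
move=> sy H [a [b [c [d [u /and3P[h1 h2 h3] /and3P[h4 h5 h6]]]]]].
apply: H; exists b, d, a, c.
move: u; rewrite /= !inE !negb_or andbT => /and3P[/and3P[ab ac ad] /andP[bc bd] cd].
move: h1 h2 h3 h4 h5 h6; rewrite /crel ab ac ad bc bd cd /= !negbK => h1 h2 h3 h4 h5 h6.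
split.
- by rewrite (eq_sym b a) ab (eq_sym d a) ad (eq_sym d c) cd.
- by rewrite h5 (sy d a) h6 h4.
- by rewrite (sy b a) h1 (sy d c) h3 h2.
Qed.


Lemma nbr_exists (T : finType) (e : rel T) (sy : symmetric e) (U X Y : {set T}) v :
  X \subset U -> X != set0 -> v \in U -> v \notin X ->
  (forall w, w \in U -> [|| w == v, w \in X | w \in Y]) ->
  (forall x y, x \in X -> y \in Y -> ~~ e x y) ->
  ~ (exists A, sep e U A) -> exists2 z, z \in X & e v z.
Proof.
move=> sX nX vU vX hU XY ns; apply/exists_inP; apply: contraT => /exists_inPn H; exfalso.
apply: ns; exists X; split => //.
- by apply/eqP => XU; rewrite XU vU in vX.
- move=> x y xX; rewrite inE => /andP[yX yU].
  case/or3P: (hU y yU) => [/eqP ->| |]; first by rewrite sy; exact: H.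
  + by rewrite (negbTE yX).
  + by move=> yY; exact: XY.
Qed.

Lemma inner (T : finType) (e : rel T) (sy : symmetric e) (P4 : P4free e)
  (U A1 B1 : {set T}) v x0 z :
  v \in U -> v \notin A1 -> v \notin B1 -> A1 \subset U ->
  (forall w, w \in U -> [|| w == v, w \in A1 | w \in B1]) ->
  (forall x y, x \in A1 -> y \in B1 -> ~~ e x y) ->
  x0 \in A1 -> ~~ e v x0 -> z \in B1 -> e v z ->
  ~ (exists A, sep e U A) -> False.
Proof.
move=> vU vA vB sA hU AB x0A nvx0 zB evz ns.
set M := [set x in A1 | ~~ e v x].
have : ~~ [forall x in M, [forall y in U :\: M, ~~ e x y]].
  apply/negP => /forall_inP H; apply: ns; exists M; split.
  - apply/subsetP => x; rewrite inE => /andP[xA _]; exact: (subsetP sA x xA).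
  - by apply/set0Pn; exists x0; rewrite inE x0A nvx0.
  - apply/eqP => MU; have : v \in M by rewrite MU.
    by rewrite inE (negbTE vA).
  - by move=> x y xM yUM; move/forall_inP: (H x xM); apply.
move=> /forall_inPn [x xM] /forall_inPn [w wUM]; rewrite negbK => exw.
move: xM; rewrite inE => /andP[xA nvx].
move: wUM; rewrite !inE negb_and => /andP[wM wU].
have wv : w != v by apply/eqP => wv; subst w; rewrite sy exw in nvx.
have wA : w \in A1.
  case/or3P: (hU w wU) => [/eqP wv'| //|wB]; first by rewrite wv' eqxx in wv.
  by have := AB x w xA wB; rewrite exw.
move: wM; rewrite wA /= negbK => evw.
apply: P4; exists x, w, v, z; split.
- rewrite /= !inE !negb_or andbT.
  have xw : x != w by apply/eqP => xw; subst w; rewrite evw in nvx.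
  have xv : x != v by apply/eqP => xv; subst x; rewrite xA in vA.
  have xz : x != z by apply/eqP => xz; subst z; rewrite evz in nvx.
  have wz : w != z by apply/eqP => wz; subst z; have := AB x w xA zB; rewrite exw.
  have vz : v != z by apply/eqP => vz; subst z; rewrite zB in vB.
  by rewrite xw xv xz wv wz vz.
- by rewrite exw sy evw evz.
- by rewrite sy nvx (AB w z wA zB) (AB x z xA zB).
Qed.

Lemma key (T : finType) (e : rel T) (sy : symmetric e) (P4 : P4free e)
  (U A' : {set T}) v :
  v \in U -> sep e (U :\ v) A' -> ~ (exists A, sep e U A) ->
  ~ (exists A, sep (crel e) U A) -> False.
Proof.
move=> vU [sA' nA' nU' noedge] ns ns'.
set B' := (U :\ v) :\: A'.
have vA' : v \notin A'.
  by apply/negP => vA; have := subsetP sA' v vA; rewrite !inE eqxx.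
have vB' : v \notin B' by rewrite !inE eqxx andbF.
have hU : forall w, w \in U -> [|| w == v, w \in A' | w \in B'].
  move=> w wU; case: (eqVneq w v) => //= wv; rewrite !inE wv wU /=.
  by case: (w \in A').
have hU' : forall w, w \in U -> [|| w == v, w \in B' | w \in A'].
  by move=> w /hU /or3P[->| ->| ->]; rewrite ?orbT.
have AB : forall x y, x \in A' -> y \in B' -> ~~ e x y by move=> x y; exact: noedge.
have BA : forall x y, x \in B' -> y \in A' -> ~~ e x y.
  by move=> x y xB yA; rewrite sy; exact: AB.
have sAU : A' \subset U by apply: subset_trans sA' _; apply: subsetDl.
have sBU : B' \subset U by apply: subset_trans (subsetDl _ _) _; apply: subsetDl.
have nB' : B' != set0.
  apply/negP => /eqP B0; move: nU'; rewrite eqEsubset sA' /=.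
  by move/eqP: B0; rewrite setD_eq0 => ->.
have [x0 x0U' nvx0] : exists2 x, x \in U :\ v & ~~ e v x.
  apply/exists_inP; apply: contraT => /exists_inPn H; exfalso; apply: ns'; exists [set v]; split.
  - by rewrite sub1set.
  - by apply/set0Pn; exists v; exact: set11.
  - apply/eqP => Uv; case/set0Pn: nA' => y yA.
    have := subsetP sA' y yA; rewrite -Uv => /setD1P [yv] /set1P yv'.
    by rewrite yv' eqxx in yv.
  - move=> x y; rewrite inE => /eqP -> yUv.
    by rewrite /crel negb_and negbK (negbNE (H y yUv)) orbT.
have x0U : x0 \in U by move: x0U'; rewrite !inE => /andP[].
case/or3P: (hU x0 x0U) => [/eqP x0v|x0A|x0B].
- by move: x0U'; rewrite x0v !inE eqxx.
- have [z zB evz] := nbr_exists sy sBU nB' vU vB' hU' BA ns.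
  exact: (inner sy P4 vU vA' vB' sAU hU AB x0A nvx0 zB evz ns).
- have [z zA evz] := nbr_exists sy sAU nA' vU vA' hU AB ns.
  exact: (inner sy P4 vU vB' vA' sBU hU' BA x0B nvx0 zA evz ns).
Qed.

Lemma sep_crelK (T : finType) (e : rel T) (U A : {set T}) :
  irreflexive e -> sep (crel (crel e)) U A -> sep e U A.
Proof. by move=> irr; rewrite crelK. Qed.

Lemma decomp (T : finType) (e : rel T) (sy : symmetric e) (irr : irreflexive e)
  (P4 : P4free e) n (U : {set T}) :
  #|U| = n.+2 -> (exists A, sep e U A) \/ (exists A, sep (crel e) U A).
Proof.
elim: n U => [|n IH] U cU.
- have /cards2P [x [y [xy Uxy]]] : #|U| == 2 by rewrite cU.
  have base : forall e' : rel T, e' x y = false -> sep e' U [set x].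
    move=> e' hxy; split.
    + by rewrite Uxy sub1set !inE eqxx.
    + by apply/set0Pn; exists x; exact: set11.
    + by apply/eqP => h; move: cU; rewrite -h cards1.
    + move=> x' y'; rewrite inE => /eqP ->; rewrite Uxy !inE.
      by case/andP => /negbTE -> /= /eqP ->; rewrite hxy.
  case exy: (e x y).
  + by right; exists [set x]; apply: base; rewrite /crel xy exy.
  + by left; exists [set x]; apply: base.
- have : 0 < #|U| by rewrite cU.
  rewrite card_gt0 => /set0Pn [v vU].
  have cU' : #|U :\ v| = n.+2 by have := cardsD1 v U; rewrite vU cU; lia.
  apply: NNPP => H; move/not_or_and: H => [H1 H2].
  case: (IH _ cU') => [[A0 sA0]|[A0 sA0]].
  + exact: (key sy P4 vU sA0 H1 H2).
  + apply: (key (crel_sym sy) (crel_P4 sy P4) vU sA0 H2).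
    by case => A /(sep_crelK irr) hA; apply: H1; exists A.
Qed.


Definition F (m a b : nat) := (a %/ m) * (b %/ m) * m + (a %/ m) * (b %% m) + (b %/ m) * (a %% m).

Lemma F_eq m a b : 0 < m -> m * F m a b + (a %% m) * (b %% m) = a * b.
Proof.
move=> m0; rewrite [in RHS](divn_eq a m) [in RHS](divn_eq b m) /F.
set p := a %/ m; set r := a %% m; set q := b %/ m; set s := b %% m.
nia.
Qed.

Lemma F_stmt m a b : 0 < m -> (a * b - (a %% m) * (b %% m)) %/ m = F m a b.
Proof.
move=> m0; rewrite -(F_eq a b m0) addnK mulKn //.
Qed.

Lemma F_sym m a b : F m a b = F m b a.
Proof.
rewrite /F; move: (a %/ m) (b %/ m) (a %% m) (b %% m) => p q r s; lia.
Qed.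

Lemma F_super m a b1 b2 : 0 < m -> F m a b1 + F m a b2 <= F m a (b1 + b2).
Proof.
move=> m0.
have h1 := F_eq a b1 m0; have h2 := F_eq a b2 m0; have h3 := F_eq a (b1 + b2) m0.
have hm : (b1 + b2) %% m <= b1 %% m + b2 %% m by rewrite -modnDm leq_mod.
have hr : (a %% m) * ((b1 + b2) %% m) <= (a %% m) * (b1 %% m + b2 %% m) by rewrite leq_mul2l hm orbT.
rewrite -(leq_pmul2l m0).
move: h1 h2 h3 hr hm; move: (F m a b1) (F m a b2) (F m a (b1 + b2)) (a %% m) (b1 %% m) (b2 %% m) ((b1 + b2) %% m).
move=> F1 F2 F3 r s1 s2 s3; lia.
Qed.

Lemma F_ge m a b : 0 < m -> m <= a -> b <= F m a b.
Proof.
move=> m0 ma; have p1 : 0 < a %/ m by rewrite divn_gt0.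
rewrite /F {1}(divn_eq b m).
move: p1; move: (a %/ m) (b %/ m) (a %% m) (b %% m) => p q r s; nia.
Qed.


Lemma spB_sub (T : finType) (e : rel T) k (U V : {set T}) b :
  V \subset U -> spB e k U b -> spB e k V b.
Proof. by move=> VU H S SV; apply: H; apply: subset_trans VU. Qed.

Lemma sparse0 (T : finType) (e : rel T) k : sparseb e k set0.
Proof. by apply/forall_inP => x; rewrite inE. Qed.

Lemma union_step (T : finType) (e : rel T) (sy : symmetric e) (irr : irreflexive e)
  k (U A : {set T}) a b :
  (forall V : {set T}, #|V| < #|U| -> forall c, k.+1 <= c ->
     spB e k V c -> spB (crel e) k V a -> #|V| <= F k.+1 a c) ->
  k.+1 <= a -> sep e U A -> spB e k U b -> spB (crel e) k U a -> #|U| <= F k.+1 a b.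
Proof.
move=> IH ka [sAU nA nAU noedge] spU dnU.
set B := U :\: A.
pose P := fun S : {set T} => (S \subset A) && sparseb e k S.
have P0 : P set0 by rewrite /P sub0set sparse0.
case: (@arg_maxnP _ set0 P (fun S => #|S|) P0) => S1 /andP[S1A spS1] maxS1.
set b1 := #|S1|.
have spA : spB e k A b1 by move=> S SA spS; apply: maxS1; rewrite /P SA spS.
have b1b : b1 <= b by apply: spU => //; apply: subset_trans sAU.
have spB' : spB e k B (b - b1).
  move=> S2 S2B spS2.
  have dis : S1 :&: S2 = set0.
    apply/setP => x; rewrite !inE; apply/negP => /andP[x1 x2].
    by have := subsetP S2B x x2; rewrite inE (subsetP S1A x x1).
  have sp12 : sparseb e k (S1 :|: S2).
    apply/forall_inP => x; rewrite inE => /orP[x1|x2].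
    + move/forall_inP: spS1 => /(_ x x1); apply: leq_trans; apply: subset_leq_card.
      apply/subsetP => y; rewrite !inE => /andP[/orP[y1|y2] exy]; first by rewrite y1.
      by have := noedge x y (subsetP S1A x x1) (subsetP S2B y y2); rewrite exy.
    + move/forall_inP: spS2 => /(_ x x2); apply: leq_trans; apply: subset_leq_card.
      apply/subsetP => y; rewrite !inE => /andP[/orP[y1|y2] exy]; last by rewrite y2.
      by have := noedge y x (subsetP S1A y y1) (subsetP S2B x x2); rewrite sy exy.
  have := spU _ _ sp12; rewrite cardsU dis cards0 subn0.
  have -> : S1 :|: S2 \subset U.
    by rewrite subUset (subset_trans S1A sAU) (subset_trans S2B (subsetDl _ _)).
  move=> /(_ isT); rewrite -/b1; lia.
have cU : #|U| = #|A| + #|B|.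
  by rewrite -(cardsID A U) (setIidPr sAU).
have nB : B != set0.
  apply/negP => /eqP B0; move: nAU; rewrite eqEsubset sAU /=.
  by move/eqP: B0; rewrite setD_eq0 => ->.
have partb : forall (V : {set T}) c, V \subset U -> #|V| < #|U| -> spB e k V c -> #|V| <= F k.+1 a c.
  move=> V c VU lt spV.
  case: (leqP k.+1 c) => kc.
  - by apply: IH => //; apply: spB_sub dnU.
  - apply: leq_trans (F_ge c _ ka) => //; apply: spB_small spV _ => //.
have hA : #|A| <= F k.+1 a b1.
  apply: partb => //; rewrite cU -{1}(addn0 #|A|) ltn_add2l card_gt0 //.
have hB : #|B| <= F k.+1 a (b - b1).
  apply: partb => //; first exact: subsetDl.
  rewrite cU -{1}(add0n #|B|) ltn_add2r card_gt0 //.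
rewrite cU; apply: leq_trans (leq_add hA hB) _.
apply: leq_trans (F_super _ _ _ _) _ => //.
by rewrite subnKC.
Qed.

Lemma upper (T : finType) k N : forall (e : rel T), symmetric e -> irreflexive e -> P4free e ->
  forall U : {set T}, #|U| <= N -> forall a b, k.+1 <= a -> k.+1 <= b ->
  spB e k U b -> spB (crel e) k U a -> #|U| <= F k.+1 a b.
Proof.
elim: N => [|N IH] e sy irr P4 U cU a b ka kb spU dnU.
  by move: cU; rewrite leqn0 => /eqP ->.
case: (leqP #|U| 1) => c1.
  by apply: leq_trans c1 _; apply: leq_trans (F_ge b _ ka) => //; lia.
have [n cn] : exists n, #|U| = n.+2 by exists (#|U| - 2); lia.
case: (decomp sy irr P4 cn) => [[A sA]|[A sA]].
- apply: (union_step sy irr _ ka sA spU dnU) => V lt c kc spV dnV.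
  by apply: (IH e) => //; lia.
- rewrite F_sym.
  have spU' : spB (crel (crel e)) k U b by rewrite crelK.
  apply: (union_step (crel_sym sy) (@crel_irr _ e) _ kb sA dnU spU') => V lt c kc spV dnV.
  apply: (IH (crel e) (crel_sym sy) (@crel_irr _ e) (crel_P4 sy P4)) => //; lia.
Qed.


Lemma card_part_le (T J : finType) (p : T -> J) (S : {set T}) (bnd : J -> nat) :
  (forall j, #|[set x in S | p x == j]| <= bnd j) -> #|S| <= \sum_j bnd j.
Proof.
move=> H; rewrite -sum1_card (partition_big p xpredT) //=.
apply: leq_sum => j _; apply: leq_trans (H j); rewrite -sum1_card.
by apply: eq_leq; apply: eq_bigl => x; rewrite !inE.
Qed.

Lemma star_bound (T : finType) (e : rel T) k (X : {set T}) x0 :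
  sparseb e k X -> x0 \in X -> (forall y, y \in X -> y != x0 -> e x0 y) -> #|X| <= k.+1.
Proof.
move=> /forall_inP sp x0X H; have := sp x0 x0X.
have : X :\ x0 \subset [set y in X | e x0 y].
  by apply/subsetP => y; rewrite !inE => /andP[yx yX]; rewrite yX H.
move/subset_leq_card; have := cardsD1 x0 X; rewrite x0X; lia.
Qed.

Lemma dense_deg (T : finType) (e : rel T) k (S : {set T}) u :
  sparseb (crel e) k S -> u \in S -> #|S| <= k.+1 + #|[set y in S | e u y]|.
Proof.
move=> /forall_inP sp uS; have := sp u uS.
have : S \subset u |: ([set y in S | crel e u y] :|: [set y in S | e u y]).
  apply/subsetP => y yS; rewrite !inE yS /crel /=.
  by case: eqVneq => //= _; case: (e u y).
move/subset_leq_card => h1 h2.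
have [h3 _] := leq_card_setU [set u] ([set y in S | crel e u y] :|: [set y in S | e u y]).
have [h4 _] := leq_card_setU [set y in S | crel e u y] [set y in S | e u y].
rewrite cards1 in h3; lia.
Qed.

Lemma cross_bound (T J : finType) (e : rel T) (L : T -> J) k (S : {set T}) x y :
  (forall u v, e u v -> L u = L v) -> sparseb (crel e) k S -> x \in S -> y \in S ->
  L x != L y -> #|S| <= k + k.
Proof.
move=> HL /forall_inP sp xS yS Lxy.
have : S \subset [set z in S | crel e x z] :|: [set z in S | crel e y z].
  apply/subsetP => z zS; rewrite !inE zS /crel /=.
  have nxz : forall w, L w != L z -> (w != z) && ~~ e w z.
    move=> w Lwz; apply/andP; split; first by apply: contraNneq Lwz => ->.
    by apply/negP => /HL Lw; rewrite Lw eqxx in Lwz.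
  case: (eqVneq (L x) (L z)) => [Lxz|Lxz]; last by rewrite nxz.
  have Lyz : L y != L z by rewrite -Lxz eq_sym.
  by rewrite (nxz y Lyz) orbT.
move/subset_leq_card; have [h4 _] := leq_card_setU [set z in S | crel e x z] [set z in S | crel e y z].
have := sp x xS; have := sp y yS; lia.
Qed.

Definition T1 (q r m s : nat) : finType := (('I_q * ('I_r + 'I_m)) + 'I_s)%type.
Definition lab1 q r m s (x : T1 q r m s) : ('I_q + unit)%type :=
  match x with inl (c, _) => inl c | inr _ => inr tt end.
Definition isI q r m s (x : T1 q r m s) : bool :=
  match x with inl (_, inr _) => true | _ => false end.
Definition e1 q r m s : rel (T1 q r m s) :=
  fun x y => (x != y) && (lab1 x == lab1 y) && ~~ (isI x && isI y).

Lemma e1_sym q r m s : symmetric (@e1 q r m s).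
Proof. by move=> x y; rewrite /e1 [y == x]eq_sym [lab1 y == lab1 x]eq_sym [isI y && isI x]andbC. Qed.

Lemma e1_irr q r m s : irreflexive (@e1 q r m s).
Proof. by move=> x; rewrite /e1 eqxx. Qed.

Lemma e1_P4 q r m s : P4free (@e1 q r m s).
Proof.
move=> [a [b [c [d [u /and3P[h1 h2 h3] /and3P[h4 h5 h6]]]]]].
move: u; rewrite /= !inE !negb_or andbT => /and3P[/and3P[ab ac ad] /andP[bc bd] cd].
move: h1 h2 h3 h4 h5 h6; rewrite /e1 ab ac ad bc bd cd /=.
move=> /andP[/eqP l1 i1] /andP[/eqP l2 i2] /andP[/eqP l3 i3].
rewrite l1 l2 l3 eqxx /= !negbK => /andP[Ia Ic] /andP[Ib Id] _.
by rewrite Ia Ib in i1.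
Qed.

Lemma sub_imset_card (A T : finType) (f : A -> T) (X : {set T}) :
  (forall x, x \in X -> exists z, x = f z) -> #|X| <= #|A|.
Proof.
move=> H; apply: leq_trans (_ : #|f @: [set: A]| <= _); last first.
  by apply: leq_trans (leq_imset_card _ _) _; rewrite cardsT.
apply: subset_leq_card; apply/subsetP => x /H [z ->]; exact: imset_f (in_setT z).
Qed.

Lemma sub_imset_ord n (T : finType) (f : 'I_n -> T) (X : {set T}) :
  (forall x, x \in X -> exists z, x = f z) -> #|X| <= n.
Proof. by move=> H; apply: leq_trans (sub_imset_card H) _; rewrite card_ord. Qed.

Lemma T1_alpha q r s k : spB (@e1 q r k.+1 s) k setT (q * k.+1 + s).
Proof.
move=> S _ sp.
pose bnd := fun j : ('I_q + unit)%type => match j with inl _ => k.+1 | inr _ => s end.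
apply: leq_trans (@card_part_le _ _ (@lab1 q r k.+1 s) S bnd _) _; last first.
  by rewrite big_sumType /= !sum_nat_const card_ord card_unit; lia.
have spX : forall j, sparseb (@e1 q r k.+1 s) k [set x in S | lab1 x == j].
  by move=> j; apply: sparse_sub sp; apply/subsetP => x; rewrite inE => /andP[].
move=> [c|[]] /=.
- case: (boolP [exists x in [set x in S | lab1 x == inl c], ~~ isI x]).
  + move=> /exists_inP [x0 x0X nI]; apply: (star_bound (spX _) x0X) => y yX yx0.
    move: x0X yX; rewrite !inE /e1 [x0 == y]eq_sym yx0 => /andP[_ /eqP ->] /andP[_ /eqP ->].
    by rewrite eqxx /= negb_and nI.
  + move=> /exists_inPn allI; apply: (@sub_imset_ord k.+1 _ (fun z => inl (c, inr z))) => x xX.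
    have := allI x xX; move: xX; rewrite !inE negbK.
    by case: x => [[c' [z|z]]|z] //= /andP[_ /eqP [->]] _; exists z.
- apply: (@sub_imset_ord s _ inr) => x; rewrite !inE.
  by case: x => [[c' w]|z] /andP[_ /eqP] // _; exists z.
Qed.

Lemma T1_omega q r s k : s <= k -> spB (crel (@e1 q r k.+1 s)) k setT (k.+1 + r).
Proof.
move=> sk S _ dn.
have claim : forall c w, inl (c, w) \in S ->
    (forall y, y \in S -> @e1 q r k.+1 s (inl (c, w)) y -> ~~ isI y) -> #|S| <= k.+1 + r.
  move=> c w uS H; apply: leq_trans (dense_deg dn uS) _; rewrite leq_add2l.
  apply: (@sub_imset_ord r _ (fun z => inl (c, inl z))) => y; rewrite inE => /andP[yS ey].
  have := H y yS ey; move: ey; rewrite /e1.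
  by case: y {yS} => [[c' [z|z]]|z] //= /andP[/andP[_ /eqP [->]] _] _; exists z.
case: (boolP [exists u in S, isI u]) => [/exists_inP [u uS Iu] | /exists_inPn nI].
- move: uS Iu; case: u => [[c w]|z] // uS Iu; apply: (claim c w uS) => y yS.
  by rewrite /e1 Iu /= => /andP[_].
case: (boolP [exists u in S, if u is inl _ then true else false]).
- move=> /exists_inP [u uS]; case: u uS => [[c w]|z] // uS _.
  by apply: (claim c w uS) => y yS _; exact: nI.
- move=> /exists_inPn H; apply: leq_trans (_ : s <= _); last by lia.
  apply: (@sub_imset_ord s _ inr) => x xS.
  by move: (H x xS); case: x {xS} => [[c w]|z] //= _; exists z.
Qed.


Lemma inr_injective (A B : Type) : injective (@inr A B).
Proof. by move=> x y []. Qed.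

Lemma inr_eq (A B : eqType) (x y : B) : (inr x == inr y :> A + B) = (x == y).
Proof. by apply/eqP/eqP => [[]|->]. Qed.

Lemma inl_eq (A B : eqType) (x y : A) : (inl x == inl y :> A + B) = (x == y).
Proof. by apply/eqP/eqP => [[]|->]. Qed.

Lemma sparse_inr (A B : finType) (R : rel (A + B)) (R' : rel B) k (S : {set A + B}) :
  (forall w w', R (inr w) (inr w') = R' w w') ->
  sparseb R k S -> sparseb R' k [set w | inr w \in S].
Proof.
move=> HR /forall_inP sp; apply/forall_inP => w; rewrite inE => wS.
apply: leq_trans (sp _ wS); rewrite -(card_imset _ (@inr_injective A B)).
apply: subset_leq_card; apply/subsetP => y /imsetP [w' ]; rewrite !inE => /andP[w'S Rw] ->.
by rewrite w'S HR Rw.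
Qed.

Lemma card_inr (A B : finType) (S : {set A + B}) (X : {set A + B}) :
  X \subset S -> (forall x, x \in X -> if x is inr _ then true else false) ->
  #|X| <= #|[set w | inr w \in S]|.
Proof.
move=> XS H; apply: leq_trans (leq_imset_card (@inr A B) _).
apply: subset_leq_card; apply/subsetP => x xX; have := H x xX.
case: x xX => // w xX _; apply: imset_f; rewrite inE; exact: (subsetP XS).
Qed.


Definition e2 (q1 a : nat) (W : finType) (eW : rel W) : rel (('I_q1 * 'I_a) + W)%type :=
  fun x y => match x, y with
  | inl (c, _), inl (c', _) => (x != y) && (c == c')
  | inr w, inr w' => crel eW w w'
  | _, _ => false
  end.

Definition lab2 (q1 a : nat) (W : finType) (x : (('I_q1 * 'I_a) + W)%type) : ('I_q1 + unit)%type :=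
  match x with inl (c, _) => inl c | inr _ => inr tt end.

Lemma e2_sym q1 a (W : finType) (eW : rel W) : symmetric eW -> symmetric (@e2 q1 a W eW).
Proof.
move=> sy [[c i]|w] [[c' i']|w'] //=; first by rewrite eq_sym (eq_sym c).
exact: crel_sym.
Qed.

Lemma e2_irr q1 a (W : finType) (eW : rel W) : irreflexive (@e2 q1 a W eW).
Proof. by move=> [[c i]|w] /=; rewrite ?eqxx // crel_irr. Qed.

Lemma e2_lab q1 a (W : finType) (eW : rel W) x y : @e2 q1 a W eW x y -> lab2 x = lab2 y.
Proof. by case: x y => [[c i]|w] [[c' i']|w'] //= /andP[_ /eqP ->]. Qed.

Lemma e2_P4 q1 a (W : finType) (eW : rel W) : symmetric eW -> P4free eW -> P4free (@e2 q1 a W eW).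
Proof.
move=> sy P4 [x [y [z [w [u /and3P[h1 h2 h3] /and3P[h4 h5 h6]]]]]].
case: x y z w u h1 h2 h3 h4 h5 h6 => [[c1 i1]|w1] [[c2 i2]|w2] [[c3 i3]|w3] [[c4 i4]|w4] //=.
- rewrite !inE !negb_or andbT => /and3P[/and3P[_ ac _] _ _].
  move=> /andP[_ /eqP e12] /andP[_ /eqP e23] _; rewrite e12 e23 in ac *; by rewrite eqxx andbT ac.
- move=> u h1 h2 h3 h4 h5 h6; apply: (crel_P4 sy P4); exists w1, w2, w3, w4; split.
  + by move: u; rewrite /= !inE !inr_eq.
  + by rewrite h1 h2 h3.
  + by rewrite h4 h5 h6.
Qed.

Lemma T2_alpha q1 a (W : finType) (eW : rel W) k oW :
  spB (crel eW) k setT oW -> spB (@e2 q1 a W eW) k setT (q1 * k.+1 + oW).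
Proof.
move=> dW S _ sp.
pose bnd := fun j : ('I_q1 + unit)%type => match j with inl _ => k.+1 | inr _ => oW end.
apply: leq_trans (@card_part_le _ _ (@lab2 q1 a W) S bnd _) _; last first.
  by rewrite big_sumType /= !sum_nat_const card_ord card_unit; lia.
have spX : forall j, sparseb (@e2 q1 a W eW) k [set x in S | lab2 x == j].
  by move=> j; apply: sparse_sub sp; apply/subsetP => x; rewrite inE => /andP[].
move=> [c|[]] /=.
- case: (set_0Vmem [set x in S | lab2 x == inl c]) => [->|[x0 x0X]]; first by rewrite cards0.
  apply: (star_bound (spX _) x0X) => y yX yx0.
  move: x0X yX yx0; rewrite !inE.
  case: x0 => [[c0 i0]|w0] /andP[_ /eqP] // [->].
  case: y => [[c' i']|w'] /andP[_ /eqP] // [->] yx0 /=.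
  by rewrite eqxx andbT eq_sym.
- apply: leq_trans (card_inr (S := S) (X := [set x in S | lab2 x == inr tt]) _ _) _.
  + by apply/subsetP => x; rewrite inE => /andP[].
  + by move=> [[c i]|w]; rewrite inE => /andP[_ /eqP].
  + by apply: dW => //; apply: (sparse_inr (R := @e2 q1 a W eW)) => // w w'.
Qed.

Lemma T2_omega q1 a (W : finType) (eW : rel W) k aW :
  irreflexive eW -> spB eW k setT aW -> aW <= a -> k + k <= a ->
  spB (crel (@e2 q1 a W eW)) k setT a.
Proof.
move=> irr sW aWa kka S _ dn.
case: (boolP [exists x in S, exists y in S, lab2 x != lab2 y]).
  move=> /exists_inP [x xS] /exists_inP [y yS] Lxy.
  apply: leq_trans kka; apply: (cross_bound (L := @lab2 q1 a W) _ dn xS yS Lxy).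
  exact: e2_lab.
move=> /exists_inPn H.
have same : forall x y, x \in S -> y \in S -> lab2 x = lab2 y.
  by move=> x y xS yS; move/exists_inPn: (H x xS) => /(_ y yS); rewrite negbK => /eqP.
case: (set_0Vmem S) => [->|[x0 x0S]]; first by rewrite cards0.
case: x0 x0S => [[c0 i0]|w0] x0S.
- apply: (@sub_imset_ord a _ (fun z => inl (c0, z))) => x xS.
  move: (same _ _ x0S xS); case: x {xS} => [[c i]|w] /= e; last by case: e.
  by case: e => ->; exists i.
- apply: leq_trans (card_inr (X := S) (subxx S) _) _.
    by move=> x xS; move: (same _ _ x0S xS); case: x {xS} => [[c i]|w] /= e //; case: e.
  apply: leq_trans aWa; apply: sW => //.
  rewrite -(crelK irr); apply: (sparse_inr (R := crel (@e2 q1 a W eW))) => // w w'.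
Qed.


Lemma spB_mono (T : finType) (e : rel T) k U b b' : b <= b' -> spB e k U b -> spB e k U b'.
Proof. by move=> bb H S SU sp; apply: leq_trans (H S SU sp) bb. Qed.

Lemma sparse_pull n (T : finType) (h : 'I_n -> T) (E : rel T) (e' : rel 'I_n) k (S : {set 'I_n}) :
  injective h -> (forall x y, e' x y = E (h x) (h y)) ->
  sparseb e' k S -> sparseb E k (h @: S).
Proof.
move=> hinj He /forall_inP sp; apply/forall_inP => z /imsetP [x xS ->].
apply: leq_trans (sp x xS); apply: leq_trans (leq_imset_card h _).
apply: subset_leq_card; apply/subsetP => y; rewrite inE => /andP[/imsetP [y' y'S ->] Ey].
by apply: imset_f; rewrite inE y'S He.
Qed.

Lemma lower_gen (T : finType) (e : rel T) k a b n :
  symmetric e -> irreflexive e -> P4free e -> spB e k setT b -> spB (crel e) k setT a ->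
  n <= #|T| -> ~ ramsey_prop_cograph k a.+1 b.+1 n.
Proof.
move=> sy irr P4 sp dn nT H.
pose h := fun i : 'I_n => enum_val (widen_ord nT i).
have hinj : injective h.
  by move=> x y /enum_val_inj [] /val_inj.
pose e' := fun x y : 'I_n => e (h x) (h y).
have [||[S [cS spS]]|[S [cS spS]]] := H e'.
- by split; [move=> x y; rewrite /e' sy|move=> x; rewrite /e' irr].
- move=> [x [y [z [w [u h1 h2]]]]]; apply: P4; exists (h x), (h y), (h z), (h w); split => //.
  by move: u; rewrite -(map_inj_uniq hinj).
- have sp' : sparseb (crel e) k (h @: S).
    apply: (sparse_pull (e' := compl_rel e')) => //; first by move=> x y; rewrite /compl_rel /crel /e' (inj_eq hinj).
    by apply/forall_inP.
  have := dn _ (subsetT _) sp'; rewrite card_imset // cS; lia.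
- have sp' : sparseb e k (h @: S).
    apply: (sparse_pull (e' := e')) => //; by apply/forall_inP.
  have := sp _ (subsetT _) sp'; rewrite card_imset // cS; lia.
Qed.

Lemma noset_spB n (e : rel 'I_n) k c :
  ~ (exists S, k_sparse_set e k c.+1 S) -> spB e k setT c.
Proof.
move=> H S _ spS; rewrite leqNgt; apply/negP => lt.
have [S' [S'S cS']] := exists_sub lt.
apply: H; exists S'; split => //; apply/forall_inP; exact: sparse_sub spS.
Qed.

Lemma upper_final k a b : k.+1 <= a -> k.+1 <= b ->
  ramsey_prop_cograph k a.+1 b.+1 (F k.+1 a b).+1.
Proof.
move=> ka kb e [sy irr] cog.
apply: NNPP => H; move/not_or_and: H => [H1 H2].
have sp := noset_spB H2.
have dn : spB (crel e) k setT a by apply: (noset_spB (e := compl_rel e)).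
have := @upper _ k _ e sy irr cog setT (leqnn _) a b ka kb sp dn; rewrite cardsT card_ord; lia.
Qed.

Lemma construct k a b : k.+1 <= a -> k.+1 <= b ->
  exists (T : finType) (e : rel T), symmetric e /\ irreflexive e /\ P4free e /\
    spB e k setT b /\ spB (crel e) k setT a /\ #|T| = F k.+1 a b.
Proof.
move=> ka kb.
have m0 : 0 < k.+1 by [].
have ea := divn_eq a k.+1; have eb := divn_eq b k.+1.
have rk : a %% k.+1 <= k by rewrite -ltnS ltn_pmod.
have sk : b %% k.+1 <= k by rewrite -ltnS ltn_pmod.
have p1 : 0 < a %/ k.+1 by rewrite divn_gt0.
have q1 : 0 < b %/ k.+1 by rewrite divn_gt0.
have hF : F k.+1 a b = (a %/ k.+1) * (b %/ k.+1) * k.+1 + (a %/ k.+1) * (b %% k.+1)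
   + (b %/ k.+1) * (a %% k.+1) by [].
move: ea eb rk sk p1 q1 hF.
move: (a %/ k.+1) (a %% k.+1) (b %/ k.+1) (b %% k.+1) (F k.+1 a b) => p r q s FF.
move=> ea eb rk sk p1 q1 hF.
case: (eqVneq p 1) => [p_1|p_n1].
- exists (T1 q r k.+1 s), (@e1 q r k.+1 s); do ! split.
  + exact: e1_sym.
  + exact: e1_irr.
  + exact: e1_P4.
  + by refine (spB_mono _ (@T1_alpha q r s k)); lia.
  + by refine (spB_mono _ (@T1_omega q r s k sk)); lia.
  + rewrite /T1 card_sum card_prod card_sum !card_ord; subst p; lia.
- have p2 : 2 <= p by lia.
  case: q q1 eb hF => [//|q'] _ eb hF.
  exists (('I_q' * 'I_a) + T1 p s k.+1 r)%type, (@e2 q' a _ (@e1 p s k.+1 r)); do ! split.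
  + apply: e2_sym; exact: e1_sym.
  + exact: e2_irr.
  + apply: e2_P4; [exact: e1_sym|exact: e1_P4].
  + by refine (spB_mono _ (@T2_alpha q' a _ _ k _ (@T1_omega p s r k rk))); lia.
  + apply: (@T2_omega q' a _ _ k _ (@e1_irr _ _ _ _) (@T1_alpha p s r k)); nia.
  + rewrite card_sum card_prod /T1 card_sum card_prod card_sum !card_ord; nia.
Qed.


Theorem theorem7p2 (k i j : nat) (hi : k + 2 <= i) (hj : k + 2 <= j) :
  is_ramsey_cograph k i j
    (1 + ((i - 1) * (j - 1) - ((i - 1) %% (k + 1)) * ((j - 1) %% (k + 1))) %/ (k + 1)).
Proof.
case: i hi => [|a] hi; first by lia.
case: j hj => [|b] hj; first by lia.
rewrite !subn1 /= addn1 F_stmt // add1n.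
have ka : k.+1 <= a by lia.
have kb : k.+1 <= b by lia.
split; first exact: upper_final.
move=> n ltn.
have [T [e [sy [irr [P4 [sp [dn cT]]]]]]] := construct ka kb.
apply: (lower_gen sy irr P4 sp dn); rewrite cT; lia.
Qed.
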